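(* Let $\theta\in\mathbb{R}$, $\alpha_1>0$, $\alpha_2>0$, let $R_\theta=\begin{bmatrix}\cos\theta&-\sin\theta\\ \sin\theta&\cos\theta\end{bmatrix}$ acting on $\mathbb{R}^2$, and set $R_1=(1-\alpha_1)\mathrm{Id}+\alpha_1R_\theta$, $R_2=(1-\alpha_2)\mathrm{Id}-\alpha_2R_\theta$, $R=R_2R_1$, and $$\kappa=\alpha_1+\alpha_2-2\alpha_1\alpha_2\sin^2\theta-(\alpha_1-\alpha_2)\cos\theta.$$ Then $R_1$ is $\alpha_1$-conically nonexpansive, $R_2$ is $\alpha_2$-conically nonexpansive, and if $\kappa<0$ then $R$ is not conically nonexpansive (i.e., there is no $\alpha>0$ for which $R$ is $\alpha$-conically nonexpansive).
   Context: For $\alpha>0$, an operator $T\colon\mathbb{R}^2\to\mathbb{R}^2$ is $\alpha$-conically nonexpansive if there exists a nonexpansive ($1$-Lipschitz) $N$ with $T=(1-\alpha)\mathrm{Id}+\alpha N$. *)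

(* Defs.v *)
From Stdlib Require Import Reals Lra.
Open Scope R_scope.

Definition vec2 : Type := (R * R)%type.

Definition vadd (u v : vec2) : vec2 := (fst u + fst v, snd u + snd v).
Definition vscale (c : R) (u : vec2) : vec2 := (c * fst u, c * snd u).
Definition vsub (u v : vec2) : vec2 := (fst u - fst v, snd u - snd v).
Definition vnorm (u : vec2) : R := sqrt (fst u ^ 2 + snd u ^ 2).

Definition nonexpansive (N : vec2 -> vec2) : Prop :=
  forall x y : vec2, vnorm (vsub (N x) (N y)) <= vnorm (vsub x y).

Definition conically_nonexpansive (alpha : R) (T : vec2 -> vec2) : Prop :=
  exists N : vec2 -> vec2, nonexpansive N /\
    forall x : vec2, T x = vadd (vscale (1 - alpha) x) (vscale alpha (N x)).

Definition rot (theta : R) (x : vec2) : vec2 :=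
  (cos theta * fst x - sin theta * snd x, sin theta * fst x + cos theta * snd x).

Definition Rop1 (theta a1 : R) (x : vec2) : vec2 :=
  vadd (vscale (1 - a1) x) (vscale a1 (rot theta x)).
Definition Rop2 (theta a2 : R) (x : vec2) : vec2 :=
  vsub (vscale (1 - a2) x) (vscale a2 (rot theta x)).

Definition kappa (theta a1 a2 : R) : R :=
  a1 + a2 - 2 * a1 * a2 * (sin theta) ^ 2 - (a1 - a2) * cos theta.

(* Main.v *)
Require Import Defs.
From Stdlib Require Import Reals Lra Psatz.
Open Scope R_scope.

Lemma rot_iso (theta : R) (x y : vec2) :
  vnorm (vsub (rot theta x) (rot theta y)) = vnorm (vsub x y).
Proof.
  destruct x as [x1 x2], y as [y1 y2]; unfold vnorm, vsub, rot; simpl.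
  f_equal. pose proof (sin2_cos2 theta) as H. unfold Rsqr in H.
  set (c := cos theta) in *; set (s := sin theta) in *.
  transitivity ((s*s + c*c) * ((x1 - y1) ^ 2 + (x2 - y2) ^ 2)); [ring|].
  rewrite H; ring.
Qed.

Lemma nrot_iso (theta : R) (x y : vec2) :
  vnorm (vsub (vscale (-1) (rot theta x)) (vscale (-1) (rot theta y))) = vnorm (vsub x y).
Proof.
  rewrite <- (rot_iso theta x y).
  destruct x as [x1 x2], y as [y1 y2]; unfold vnorm, vsub, vscale, rot; simpl.
  f_equal; ring.
Qed.

Theorem mainTheorem9 (theta a1 a2 : R) (h1 : 0 < a1) (h2 : 0 < a2) :
  conically_nonexpansive a1 (Rop1 theta a1) /\
  conically_nonexpansive a2 (Rop2 theta a2) /\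
  (kappa theta a1 a2 < 0 ->
   ~ (exists alpha : R, 0 < alpha /\
        conically_nonexpansive alpha (fun x => Rop2 theta a2 (Rop1 theta a1 x)))).
Proof.
  split; [|split].
  - exists (rot theta); split.
    + intros x y; rewrite rot_iso; lra.
    + intros x; reflexivity.
  - exists (fun x => vscale (-1) (rot theta x)); split.
    + intros x y; rewrite nrot_iso; lra.
    + intros [x1 x2]; unfold Rop2, vsub, vadd, vscale; simpl; f_equal; ring.
  - intros Hk [alpha [Ha [N [HN HT]]]].
    pose proof (HT (0,0)) as H0. pose proof (HT (1,0)) as H1.
    pose proof (HN (1,0) (0,0)) as HNe.
    destruct (N (0,0)) as [u0 v0] eqn:E0.
    destruct (N (1,0)) as [p q] eqn:E1.
    unfold Rop2, Rop1, vsub, vadd, vscale, rot in H0, H1; simpl in H0, H1.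
    injection H0 as H0a H0b. injection H1 as H1a H1b.
    assert (u0 = 0) by nra. assert (v0 = 0) by nra. subst u0 v0.
    unfold vnorm, vsub in HNe; simpl in HNe.
    apply sqrt_le_0 in HNe; try nra.
    assert (Hpq : p * p <= 1) by nra.
    pose proof (sin2_cos2 theta) as Hsc. unfold Rsqr in Hsc.

    assert (alpha * (p - 1) = - kappa theta a1 a2).
    { assert (E : a1*a2*(sin theta * sin theta + cos theta * cos theta) = a1*a2)
        by (rewrite Hsc; ring).
      set (L := (1 - a2) * ((1 - a1) * 1 + a1 * (cos theta * 1 - sin theta * 0)) -
    a2 * (cos theta * ((1 - a1) * 1 + a1 * (cos theta * 1 - sin theta * 0)) -
     sin theta * ((1 - a1) * 0 + a1 * (sin theta * 1 + cos theta * 0)))) in H1a.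
      assert (EL : L - 1 + kappa theta a1 a2 = - (a1*a2*(sin theta * sin theta + cos theta * cos theta) - a1*a2))
        by (unfold L, kappa; ring).
      rewrite E in EL. lra. }
    assert (p > 1).
    { assert (0 < alpha * (p - 1)) by lra.
      destruct (Rle_lt_dec p 1); [|lra]. nra. }
    nra.
Qed.
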